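(* Let $n\ge 3$. If $\mu$ is a symmetric measure on $L_n$ such that $C_\mu=C_{L_n}$, then $M_1(\mu)=C^0_\mu=C_{L_n}$.
   Context: $L_n$ is the path graph with vertices $\{1,\dots,n\}$ and edges $\{j,j+1\}$, with distance $|i-j|$. A measure on $L_n$ is a weight function $\mu:\{1,\dots,n\}\to(0,\infty)$, $\mu(A)=\sum_{v\in A}\mu(v)$; it is symmetric if $\mu(j)=\mu(n+1-j)$ for all $j$. Closed balls: $B(x,r)=\{y:|x-y|\le r\}$. $C_\mu=\sup\{\mu(B(x,2k+1))/\mu(B(x,k)):1\le x\le n,\ k\ge0\}$, $C_{L_n}=\inf_\mu C_\mu$, $C^0_\mu=\max_x\mu(B(x,1))/\mu(x)$, and $M_1(\mu)=\sup\{\mu(B(1,2k+1))/\mu(B(1,k)): k\in\mathbb Z,\ 0\le k<\lceil\frac{n-2}{3}\rceil\}$. *)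

(* Defs.v *)
From mathcomp Require Import all_boot all_order all_algebra.
From mathcomp Require Import all_classical all_reals.
Set Implicit Arguments. Unset Strict Implicit. Unset Printing Implicit Defensive.
Import Order.TTheory GRing.Theory Num.Theory.
Local Open Scope ring_scope.
Local Open Scope classical_set_scope.

(* Path graph L_n: vertices 1..n, distance |i - j|.
   A measure is a function mu : nat -> R, only its values on 1..n matter. *)

Definition is_measure {R : realType} (n : nat) (mu : nat -> R) : Prop :=
  forall v : nat, (1 <= v <= n)%N -> 0 < mu v.

Definition is_symmetric {R : realType} (n : nat) (mu : nat -> R) : Prop :=
  forall j : nat, (1 <= j <= n)%N -> mu j = mu (n.+1 - j)%N.

Definition in_ball (n x r y : nat) : bool :=
  [&& (1 <= y <= n)%N, (y <= x + r)%N & (x <= y + r)%N].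

Definition mu_ball {R : realType} (n : nat) (mu : nat -> R) (x r : nat) : R :=
  \sum_(1 <= y < n.+1 | in_ball n x r y) mu y.

Definition C_mu {R : realType} (n : nat) (mu : nat -> R) : R :=
  sup [set c | exists x k : nat, (1 <= x <= n)%N /\
         c = mu_ball n mu x (2 * k + 1) / mu_ball n mu x k].

Definition C_Ln {R : realType} (n : nat) : R :=
  inf [set c | exists mu : nat -> R, is_measure n mu /\ c = C_mu n mu].

Definition C0_mu {R : realType} (n : nat) (mu : nat -> R) : R :=
  sup [set c | exists x : nat, (1 <= x <= n)%N /\ c = mu_ball n mu x 1 / mu x].

Definition ceil_div (a b : nat) : nat := ((a + b).-1 %/ b)%N.

Definition M1 {R : realType} (n : nat) (mu : nat -> R) : R :=
  sup [set c | exists k : nat, (k < ceil_div (n - 2) 3)%N /\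
         c = mu_ball n mu 1 (2 * k + 1) / mu_ball n mu 1 k].

(* Main.v *)
Require Import Defs.
From mathcomp Require Import all_boot all_order all_algebra.
From mathcomp Require Import all_classical all_reals.
From mathcomp Require Import zify ring lra.
Set Implicit Arguments. Unset Strict Implicit. Unset Printing Implicit Defensive.
Import Order.TTheory GRing.Theory Num.Theory.
Local Open Scope ring_scope.

(* Proof outline:
   (a) C_Ln >= 12/5 > 7/3; if C0 < C, perturbing mu by eps*(counting) lowers every ratio.
   (b) C_Ln <= 3 gives concavity; if M1 < C then all k>=1 ratios are strictly below C
       (Sprime), and perturbing by -eps*y^2 lowers every ratio. *)

Section Basics.
Variable R : realType.
Implicit Types (mu : nat -> R).

Definition Fx (n : nat) mu y : R := if (1 <= y <= n)%N then mu y else 0.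

Lemma sum_ind (m : nat) (f : nat -> R) a :
  \sum_(1 <= y < m.+1) (if y == a then f y else 0) = if (1 <= a <= m)%N then f a else 0.
Proof.
elim: m => [|m IH]; first by rewrite big_geq //; case: ifP => //; lia.
rewrite big_nat_recr //= IH.
case: (eqVneq m.+1 a) => [<-|ne]; rewrite ?eqxx.
  have -> : (1 <= m.+1 <= m)%N = false by lia.
  have -> : (1 <= m.+1 <= m.+1)%N by lia.
  by rewrite add0r.
rewrite addr0; case: ifP => h1; case: ifP => h2 //; lia.
Qed.

Lemma ball_mk n mu x r : mu_ball n mu x r =
  \sum_(1 <= y < n.+1) (if in_ball n x r y then mu y else 0).
Proof. by rewrite /mu_ball big_mkcond. Qed.

Lemma ball0 n mu x : mu_ball n mu x 0 = Fx n mu x.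
Proof.
rewrite ball_mk /Fx -sum_ind; apply: eq_big_nat => y hy.
rewrite /in_ball !addn0.
case: ifP => h1; case: ifP => h2 //; lia.
Qed.

Lemma ballS n mu x r : mu_ball n mu x r.+1 =
  mu_ball n mu x r + Fx n mu (x - r.+1) + Fx n mu (x + r.+1).
Proof.
rewrite !ball_mk /Fx -!sum_ind -!big_split /=; apply: eq_big_nat => y hy.
rewrite /in_ball.
case: ifP => h1; case: ifP => h2; case: ifP => h3; case: ifP => h4;
  rewrite ?addr0 ?add0r //; lia.
Qed.

End Basics.

Section Meas.
Variable R : realType.
Variable n : nat.
Variable mu : nat -> R.
Hypothesis hmeas : is_measure n mu.
Notation F := (Fx n mu).

Lemma F0 : F 0 = 0. Proof. by rewrite /Fx. Qed.
Lemma Fbig y : (n < y)%N -> F y = 0.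
Proof. by move=> h; rewrite /Fx ifF //; lia. Qed.
Lemma Fge0 y : 0 <= F y.
Proof. rewrite /Fx; case: ifP => h //; exact/ltW/hmeas. Qed.
Lemma Fgt0 y : (1 <= y <= n)%N -> 0 < F y.
Proof. by move=> h; rewrite /Fx h; apply: hmeas. Qed.

Lemma ball_ge0 x r : 0 <= mu_ball n mu x r.
Proof.
elim: r => [|r IH]; first by rewrite ball0 Fge0.
by rewrite ballS; apply: addr_ge0; [apply: addr_ge0|]; rewrite ?Fge0.
Qed.

Lemma ball_mono x r s : (r <= s)%N -> mu_ball n mu x r <= mu_ball n mu x s.
Proof.
elim: s => [|s IH]; first by rewrite leqn0 => /eqP ->.
rewrite leq_eqVlt => /orP [/eqP -> //|]; rewrite ltnS => /IH h.
rewrite ballS (le_trans h) // -addrA lerDl; apply: addr_ge0; exact: Fge0.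
Qed.

Lemma ball_gt0 x r : (1 <= x <= n)%N -> 0 < mu_ball n mu x r.
Proof.
move=> hx; apply: (lt_le_trans _ (ball_mono x (leq0n r))).
by rewrite ball0; apply: Fgt0.
Qed.

Definition tmass := \sum_(1 <= y < n.+1) mu y.

Lemma ball_total x r : (1 <= x <= n)%N -> (n <= r)%N -> mu_ball n mu x r = tmass.
Proof.
move=> hx hr; rewrite /mu_ball /tmass big_mkcond /=; apply: eq_big_nat => y hy.
rewrite ifT //; rewrite /in_ball; apply/and3P; split; lia.
Qed.

Lemma ball_le_total x r : (1 <= x <= n)%N -> mu_ball n mu x r <= tmass.
Proof.
move=> hx; rewrite -(ball_total (r := maxn r n) hx) ?leq_maxr //.
by apply: ball_mono; rewrite leq_maxl.
Qed.

Lemma ball_left x r : (1 <= x)%N -> (x <= r.+1)%N ->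
  mu_ball n mu x r = mu_ball n mu 1 (x + r - 1).
Proof.
move=> h1 h2; rewrite /mu_ball; apply: eq_bigl => y; rewrite /in_ball.
by apply/idP/idP => /and3P [a b c]; apply/and3P; split; lia.
Qed.

End Meas.

Lemma ball_lin (R : realType) n (mu d : nat -> R) (e : R) x r :
  mu_ball n (fun y => mu y + e * d y) x r = mu_ball n mu x r + e * mu_ball n d x r.
Proof. by rewrite /mu_ball big_split /= big_distrr. Qed.

Section Sym.
Variable R : realType.
Variable n : nat.
Variable mu : nat -> R.
Hypothesis hmeas : is_measure n mu.
Hypothesis hsym : is_symmetric n mu.
Notation F := (Fx n mu).

Lemma Fsym a b : (a + b = n.+1)%N -> F a = F b.
Proof.
move=> h; rewrite /Fx.
case: ifP => h1; case: ifP => h2 //; try lia.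
have -> : b = (n.+1 - a)%N by lia.
by apply: hsym.
Qed.

Lemma Fsym' a : F (n.+1 - a) = F a.
Proof.
case: (leqP a n.+1) => h; first by apply: Fsym; lia.
have -> : (n.+1 - a = 0)%N by lia.
by rewrite F0 Fbig //; lia.
Qed.

Lemma ball_mirror x r : (1 <= x <= n)%N ->
  mu_ball n mu (n.+1 - x) r = mu_ball n mu x r.
Proof.
move=> hx; elim: r => [|r IH]; first by rewrite !ball0 Fsym'.
rewrite !ballS IH -addrA -addrA; congr (_ + _).
rewrite addrC; congr (_ + _).
- case: (leqP r.+1 x) => h.
    by apply: Fsym; lia.
  have -> : (x - r.+1 = 0)%N by lia.
  by rewrite F0 Fbig //; lia.
- case: (leqP (x + r.+1) n.+1) => h.
    by apply: Fsym; lia.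
  have -> : (n.+1 - x - r.+1 = 0)%N by lia.
  by rewrite F0 Fbig //; lia.
Qed.

End Sym.

Section Conc.
Variable R : realType.
Variable n : nat.
Variable mu : nat -> R.
Variable C : R.
Hypothesis hmeas : is_measure n mu.
Hypothesis hsym : is_symmetric n mu.
Hypothesis hC3 : C <= 3.
Hypothesis hk0 : forall x, (1 <= x <= n)%N -> mu_ball n mu x 1 <= C * mu_ball n mu x 0.
Notation F := (Fx n mu).

Lemma ball1 x : mu_ball n mu x 1 = F x + F (x - 1) + F x.+1.
Proof. by rewrite ballS ball0 addn1. Qed.

Lemma k0F y : (y.+1 <= n)%N -> F y + F y.+1 + F y.+2 <= C * F y.+1.
Proof.
move=> h; have := hk0 (x := y.+1); rewrite ball1 ball0 subn1 /=.
have -> : F y.+1 + F y + F y.+2 = F y + F y.+1 + F y.+2 by ring.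
by apply; lia.
Qed.

Lemma conc y : (y.+1 <= n)%N -> F y + F y.+2 <= 2 * F y.+1.
Proof.
move=> h; have := k0F h; have := Fge0 hmeas y.+1.
move=> b c.
have d : 0 <= (3 - C) * F y.+1.
  apply: mulr_ge0 => //.
  have := hC3; lra.
lra.
Qed.

Definition D y := F y.+1 - F y.

Lemma Dmono a b : (a <= b)%N -> (b <= n)%N -> D b <= D a.
Proof.
elim: b => [|b IH]; first by rewrite leqn0 => /eqP ->.
rewrite leq_eqVlt => /orP [/eqP -> //|]; rewrite ltnS => hab hb.
apply: le_trans (IH hab (ltnW hb)).
rewrite /D; have := conc hb; lra.
Qed.

Lemma Dpos y : (y.*2 <= n)%N -> 0 <= D y.
Proof.
move=> h; have := Dmono (a := y) (b := (n - y)%N) ltac:(lia) ltac:(lia).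
rewrite /D.
have -> : F (n - y).+1 = F y by apply: Fsym => //; lia.
have -> : F (n - y) = F y.+1 by apply: Fsym => //; lia.
lra.
Qed.

Lemma Fmono_aux a k : ((a + k).*2 <= n.+2)%N -> F a <= F (a + k).
Proof.
elim: k => [|k IH] h; first by rewrite addn0.
apply: le_trans (IH ltac:(lia)) _.
have := Dpos (y := (a + k)%N) ltac:(lia); rewrite /D addnS; lra.
Qed.

Lemma Umono a b : (a <= b)%N -> (a + b <= n.+1)%N -> F a <= F b.
Proof.
move=> h1 h2.
case: (leqP b.*2 n.+2) => h3.
  by have := Fmono_aux (a := a) (k := (b - a)%N); rewrite subnKC //; apply; lia.
have -> : F b = F (n.+1 - b) by rewrite Fsym' //.
have := Fmono_aux (a := a) (k := (n.+1 - b - a)%N).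
by rewrite subnKC //; [apply; lia|lia].
Qed.

Lemma chord_aux a : (a <= n)%N -> a%:R * D a <= F a.
Proof.
elim: a => [|a IH] h; first by rewrite mul0r F0.
have h1 := IH (ltnW h).
have h2 := Dmono (a := a) (b := a.+1) (leqnSn a) h.
have h3 : 0 <= a%:R :> R by rewrite ler0n.
rewrite /D in h2 h1 *.
rewrite -natr1.
have h4 : a%:R * (F a.+2 - F a.+1) <= a%:R * (F a.+1 - F a) by apply: ler_wpM2l.
lra.
Qed.

Lemma chord_step a : (a <= n)%N -> a%:R * F a.+1 <= a.+1%:R * F a.
Proof.
move=> h; have := chord_aux h; rewrite /D -natr1; lra.
Qed.

Lemma chord a b : (0 < a)%N -> (a <= b)%N -> (b <= n.+1)%N ->
  a%:R * F b <= b%:R * F a.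
Proof.
move=> ha; elim: b => [|b IH]; first by lia.
rewrite leq_eqVlt => /orP [/eqP -> //|]; rewrite ltnS => hab hb.
have i1 := IH hab (ltnW hb).
have i2 := chord_step (a := b) ltac:(lia).
have hb0 : 0 < b%:R :> R by rewrite ltr0n; lia.
have ha0 : 0 <= a%:R :> R by rewrite ler0n.
have f0 := Fge0 hmeas a.
rewrite -addn1 natrD in i2 *.
(* b * (a F(b+1)) <= a (b+1) F b <= (b+1) b F a *)
have : b%:R * (a%:R * F (b + 1)%N) <= b%:R * ((b%:R + 1) * F a).
  apply: le_trans (_ : a%:R * ((b%:R + 1) * F b) <= _).
    by rewrite mulrCA; apply: ler_wpM2l.
  by rewrite mulrCA [X in _ <= X]mulrCA; apply: ler_wpM2l => //; nra.
by rewrite ler_pM2l.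
Qed.

End Conc.

Lemma tri_sum m d : (2 * \sum_(0 <= s < m) (s - d) = (m - d) * (m - d - 1))%N.
Proof.
elim: m => [|m IH]; first by rewrite big_geq.
rewrite big_nat_recr //= mulnDr IH.
case: (leqP d m) => h.
  have -> : (m.+1 - d = (m - d).+1)%N by lia.
  nia.
have -> : (m - d = 0)%N by lia.
have -> : (m.+1 - d = 0)%N by lia.
by [].
Qed.

Lemma arith3 d e S x : (1 <= d)%N -> x = (d + e + 1 + d)%N -> (2 * S = (e + 1) * e)%N ->
  (3 * ((d + e + 1) * (2 * x) + S) <= 4 * (2 * (d + e) + 1) * x)%N.
Proof. move=> h1 -> h2; nia. Qed.

Lemma L3 k x : (1 <= k)%N -> (k + 2 <= x)%N ->
  (3 * \sum_(0 <= s < k.+1) maxn (2 * x) (x + (k + s.+1)) <= 4 * (2 * k + 1) * x)%N.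
Proof.
move=> hk hx.
have e : forall s, maxn (2 * x) (x + (k + s.+1)) = (2 * x + (s - (x - k - 1)))%N.
  by move=> s; lia.
under eq_bigr do rewrite e.
rewrite big_split /= sum_nat_const_nat subn0.
have := tri_sum k.+1 (x - k - 1).
set S := (\sum_(0 <= s < k.+1) (s - (x - k - 1)))%N.
move=> hS.
case: (leqP (x - k - 1) k) => h.
  have := arith3 (d := (x - k - 1)%N) (e := (k - (x - k - 1))%N) (S := S) (x := x).
  have -> : (x - k - 1 + (k - (x - k - 1)) = k)%N by lia.
  move=> H; apply: leq_trans (H _ _ _); try lia.
have h0 : (k.+1 - (x - k - 1) = 0)%N by lia.
rewrite h0 mul0n in hS.
nia.
Qed.

Section SPrime.
Variable R : realType.
Variable n : nat.
Variable mu : nat -> R.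
Variable C : R.
Hypothesis hn : (3 <= n)%N.
Hypothesis hmeas : is_measure n mu.
Hypothesis hsym : is_symmetric n mu.
Hypothesis hC3 : C <= 3.
Hypothesis hC73 : 7 < 3 * C.
Hypothesis hk0 : forall x, (1 <= x <= n)%N -> mu_ball n mu x 1 <= C * mu_ball n mu x 0.
Hypothesis hM1 : forall k, (k < n %/ 3)%N -> mu_ball n mu 1 (2 * k + 1) < C * mu_ball n mu 1 k.
Notation F := (Fx n mu).

Lemma ball1S r : mu_ball n mu 1 r.+1 = mu_ball n mu 1 r + F r.+2.
Proof. by rewrite ballS subSS sub0n F0 addr0 add1n. Qed.

Lemma lemE j : (1 <= j)%N -> (n <= 3 * j + 2)%N ->
  F (2 * j + 1) + F (2 * j + 2) <= C * F j.+1.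
Proof.
move=> hj hnj.
have hC2 : 2 <= C by have := hC73; lra.
have f1 := Fge0 hmeas j.+1.
case: (ltnP n (2 * j + 1)) => h.
  rewrite (@Fbig _ n mu (2 * j + 1)) ?(@Fbig _ n mu (2 * j + 2)); try lia.
  by rewrite addr0; apply: mulr_ge0 => //; lra.
have -> : F (2 * j + 1) = F (n - 2 * j) by apply: Fsym => //; lia.
have -> : F (2 * j + 2) = F (n - 2 * j - 1) by apply: Fsym => //; lia.
case: (leqP (n - 2 * j) j.+1) => h2.
  have a1 : F (n - 2 * j) <= F j.+1 by apply: (Umono hmeas hsym hC3 hk0); lia.
  have a2 : F (n - 2 * j - 1) <= F j.+1 by apply: (Umono hmeas hsym hC3 hk0); lia.
  have : 0 <= (C - 2) * F j.+1 by apply: mulr_ge0 => //; lra.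
  lra.
have -> : (n - 2 * j = j.+2)%N by lia.
have -> : (j.+2 - 1 = j.+1)%N by lia.
have := @k0F _ _ _ _ hC3 hk0 j ltac:(lia).
have := Fge0 hmeas j; lra.
Qed.

Lemma X1 j : mu_ball n mu 1 (2 * j + 1) < C * mu_ball n mu 1 j.
Proof.
elim: j => [|j IH].
  by apply: hM1; lia.
case: (ltnP j.+1 (n %/ 3)) => h; first exact: hM1.
have e1 : (2 * j.+1 + 1 = (2 * j + 1).+2)%N by lia.
rewrite e1 [mu_ball n mu 1 (2 * j + 1).+2]ball1S [mu_ball n mu 1 (2 * j + 1).+1]ball1S.
rewrite [mu_ball n mu 1 j.+1]ball1S.
have := @lemE j.+1 ltac:(lia) ltac:(lia).
have -> : (2 * j.+1 + 1 = (2 * j + 1).+2)%N by lia.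
have -> : (2 * j.+1 + 2 = (2 * j + 1).+3)%N by lia.
move: IH; lra.
Qed.

Lemma case1 x k : (1 <= x)%N -> (x <= k.+1)%N ->
  mu_ball n mu x (2 * k + 1) < C * mu_ball n mu x k.
Proof.
move=> h1 h2.
have h3 : (x <= (2 * k + 1).+1)%N by lia.
rewrite (ball_left _ _ h1 h2) (ball_left _ _ h1 h3).
apply: le_lt_trans (X1 (x + k - 1)).
apply: (ball_mono hmeas); lia.
Qed.

Definition G x t := F (x - t) + F (x + t).

Lemma ballG x r : mu_ball n mu x r.+1 = mu_ball n mu x r + G x r.+1.
Proof. by rewrite ballS /G addrA. Qed.

Lemma G_ge0 x t : 0 <= G x t.
Proof. by rewrite /G; apply: addr_ge0; apply: Fge0. Qed.

Lemma Gmono x s t : (x.*2 <= n.+1)%N -> (s <= t)%N -> (t <= x)%N -> G x t <= G x s.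
Proof.
move=> hx; elim: t => [|t IH]; first by rewrite leqn0 => /eqP ->.
rewrite leq_eqVlt => /orP [/eqP -> //|]; rewrite ltnS => hst ht.
apply: le_trans (IH hst (ltnW ht)).
have := @Dmono _ n mu C hmeas hC3 hk0 (x - t.+1) (x + t) ltac:(lia) ltac:(lia).
rewrite /D /G.
have -> : (x - t.+1).+1 = (x - t)%N by lia.
have -> : (x + t).+1 = (x + t.+1)%N by lia.
lra.
Qed.

Lemma L1 x k j : (x.*2 <= n.+1)%N -> (k <= x)%N -> (j <= k)%N ->
  (2 * j + 1)%:R * G x k <= 2 * mu_ball n mu x j.
Proof.
move=> hx hk; elim: j => [|j IH] hj.
  rewrite ball0 mul1r.
  have := Gmono hx (leq0n k) hk; rewrite /G subn0 addn0; lra.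
rewrite ballG.
have := IH (ltnW hj); have := Gmono hx hj hk.
have -> : (2 * j.+1 + 1 = (2 * j + 1) + 2)%N by lia.
rewrite natrD.
have := G_ge0 x k; nra.
Qed.

Lemma Tterm x k t : (x.*2 <= n.+1)%N -> (1 <= k)%N -> (k <= x)%N -> (k <= t)%N ->
  (x.*2)%:R * G x t <= (maxn (x.*2) (x + t))%:R * G x k.
Proof.
move=> hx hk1 hkx hkt.
case: (leqP t x) => htx.
  have -> : maxn (x.*2) (x + t) = x.*2 by lia.
  apply: ler_wpM2l; first by rewrite ler0n.
  exact: Gmono.
have -> : maxn (x.*2) (x + t) = (x + t)%N by lia.
have eG : G x t = F (x + t) by rewrite /G (_ : x - t = 0)%N ?F0 ?add0r //; lia.
rewrite eG.
have gx : G x x <= G x k by apply: Gmono.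
have eGx : G x x = F (x.*2) by rewrite /G subnn F0 add0r addnn.
case: (leqP (x + t) n.+1) => hb.
  have := @chord _ n mu C hmeas hC3 hk0 (x.*2) (x + t) ltac:(lia) ltac:(lia) hb.
  move=> ch; apply: le_trans ch _.
  apply: ler_wpM2l; first by rewrite ler0n.
  by rewrite -eGx.
rewrite (@Fbig _ n mu (x + t)); last lia.
rewrite mulr0; apply: mulr_ge0; first by rewrite ler0n.
exact: G_ge0.
Qed.

Lemma L2 x k i : (x.*2 <= n.+1)%N -> (1 <= k)%N -> (k <= x)%N ->
  (x.*2)%:R * (mu_ball n mu x (k + i) - mu_ball n mu x k) <=
  (\sum_(0 <= s < i) maxn (x.*2) (x + (k + s.+1)))%:R * G x k.
Proof.
move=> hx hk1 hkx; elim: i => [|i IH].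
  by rewrite addn0 subrr big_geq // mulr0 mul0r.
rewrite big_nat_recr //= natrD mulrDl addnS ballG.
have := Tterm hx hk1 hkx (_ : k <= (k + i).+1)%N; rewrite addnS => /(_ (leq_trans (leq_addr i k) (leqnSn _))) T.
move: IH T; set a := (x.*2)%:R; set b := mu_ball n mu x (k + i); lra.
Qed.

Lemma case2 x k : (x.*2 <= n.+1)%N -> (1 <= k)%N -> (k + 2 <= x)%N ->
  3 * mu_ball n mu x (2 * k + 1) <= 7 * mu_ball n mu x k.
Proof.
move=> hx hk hkx.
have A := @L2 x k k.+1 hx hk ltac:(lia).
have B := L3 hk hkx.
have Cc := @L1 x k k hx ltac:(lia) (leqnn k).
have e : (k + k.+1 = 2 * k + 1)%N by lia.
rewrite e in A.
set S := (\sum_(0 <= s < k.+1) maxn (x.*2) (x + (k + s.+1)))%N in A.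
have B' : (3 * S <= 4 * (2 * k + 1) * x)%N.
  by move: B; rewrite mul2n.
have B'' : 3 * S%:R <= 4 * (2 * k + 1)%:R * x%:R :> R.
  have := B'; rewrite -(ler_nat R) !natrM => h.
  by apply: le_trans h; rewrite le_eqVlt eqxx.
set B1 := mu_ball n mu x (2 * k + 1) in A *.
set B0 := mu_ball n mu x k in A Cc *.
set g := G x k in A Cc.
set K := (2 * k + 1)%:R : R in B'' Cc.
have g0 : 0 <= g := G_ge0 x k.
have x0 : 0 < x%:R :> R by rewrite ltr0n; lia.
have ex2 : (x.*2)%:R = 2 * x%:R :> R by rewrite -mul2n natrM.
rewrite ex2 in A.
have s1 : S%:R * g * 3 <= 4 * K * x%:R * g by nra.
have s2 : 4 * K * x%:R * g <= 8 * x%:R * B0 by nra.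
have s3 : 6 * x%:R * (B1 - B0) <= 8 * x%:R * B0 by nra.
nra.
Qed.

Lemma Sprime_half x k : (1 <= x)%N -> (x.*2 <= n.+1)%N -> (1 <= k)%N ->
  mu_ball n mu x (2 * k + 1) < C * mu_ball n mu x k.
Proof.
move=> h1 hx hk.
case: (leqP x k.+1) => h2; first exact: case1.
have h3 : (k + 2 <= x)%N by lia.
have := case2 hx hk h3.
have := @ball_gt0 _ n mu hmeas x k ltac:(lia).
move: hC73; set b := mu_ball n mu x k; set c := mu_ball n mu x (2 * k + 1).
move=> h6 h4 h5; nra.
Qed.

Lemma Sprime x k : (1 <= x <= n)%N -> (1 <= k)%N ->
  mu_ball n mu x (2 * k + 1) < C * mu_ball n mu x k.
Proof.
move=> hx hk.
case: (leqP (x.*2) n.+1) => h; first by apply: Sprime_half => //; lia.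
have hx' : (1 <= n.+1 - x <= n)%N by lia.
have e : forall r, mu_ball n mu x r = mu_ball n mu (n.+1 - x) r.
  move=> r; rewrite -(@ball_mirror _ n mu hsym (n.+1 - x) r hx').
  by have -> : (n.+1 - (n.+1 - x) = x)%N by lia.
rewrite !e; apply: Sprime_half => //; lia.
Qed.

End SPrime.

Section Count.
Variable R : realType.
Variable n : nat.
Definition cnt : nat -> R := fun _ => 1.

Lemma cnt_meas : is_measure n cnt.
Proof. by move=> v _; rewrite /cnt ltr01. Qed.

Notation F1 := (Fx n cnt).
Definition Gc x t := F1 (x - t) + F1 (x + t).

Lemma Gc_step x t : (1 <= x <= n)%N -> Gc x t.+1 <= Gc x t.
Proof.
move=> hx; rewrite /Gc /Fx /cnt.
apply: lerD; case: ifP => h1; case: ifP => h2 //; try lia; by rewrite ler01.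
Qed.

Lemma Gc_mono x s t : (1 <= x <= n)%N -> (s <= t)%N -> Gc x t <= Gc x s.
Proof.
move=> hx; elim: t => [|t IH]; first by rewrite leqn0 => /eqP ->.
rewrite leq_eqVlt => /orP [/eqP -> //|]; rewrite ltnS => hst.
exact: le_trans (Gc_step t hx) (IH hst).
Qed.

Lemma Gc_ge0 x t : 0 <= Gc x t.
Proof. by rewrite /Gc; apply: addr_ge0; apply: Fge0; apply: cnt_meas. Qed.

Lemma ballGc x r : mu_ball n cnt x r.+1 = mu_ball n cnt x r + Gc x r.+1.
Proof. by rewrite ballS /Gc addrA. Qed.

Lemma L1c x k j : (1 <= x <= n)%N -> (j <= k)%N ->
  (2 * j + 1)%:R * Gc x k <= 2 * mu_ball n cnt x j.
Proof.
move=> hx; elim: j => [|j IH] hj.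
  rewrite ball0 mul1r.
  have := Gc_mono hx (leq0n k); rewrite /Gc subn0 addn0; lra.
rewrite ballGc.
have := IH (ltnW hj); have := Gc_mono hx hj.
have -> : (2 * j.+1 + 1 = (2 * j + 1) + 2)%N by lia.
rewrite natrD.
have := Gc_ge0 x k; nra.
Qed.

Lemma L2c x k i : (1 <= x <= n)%N ->
  mu_ball n cnt x (k + i) - mu_ball n cnt x k <= i%:R * Gc x k.
Proof.
move=> hx; elim: i => [|i IH].
  by rewrite addn0 subrr mul0r.
rewrite addnS ballGc -natr1 mulrDl mul1r.
have := Gc_mono hx (_ : k <= (k + i).+1)%N.
move=> /(_ (leq_trans (leq_addr i k) (leqnSn _))) T.
move: IH T; lra.
Qed.

Lemma cnt_73 x k : (1 <= x <= n)%N -> (1 <= k)%N ->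
  3 * mu_ball n cnt x (2 * k + 1) <= 7 * mu_ball n cnt x k.
Proof.
move=> hx hk.
have A := L2c k k.+1 hx.
have B := L1c hx (leqnn k).
have e : (k + k.+1 = 2 * k + 1)%N by lia.
rewrite e in A.
have g0 := Gc_ge0 x k.
have hk' : 1 <= k%:R :> R by rewrite ler1n.
move: A B; rewrite -natr1 natrD natrM.
set g := Gc x k; set B1 := mu_ball n cnt x (2 * k + 1); set B0 := mu_ball n cnt x k.
set K := k%:R.
move=> A B.
have P : 0 <= (K - 1) * g by apply: mulr_ge0 => //; lra.
lra.
Qed.

Lemma cnt_3 x k : (1 <= x <= n)%N ->
  mu_ball n cnt x (2 * k + 1) <= 3 * mu_ball n cnt x k.
Proof.
move=> hx.
have A := L2c k k.+1 hx.
have B := L1c hx (leqnn k).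
have e : (k + k.+1 = 2 * k + 1)%N by lia.
rewrite e in A.
have g0 := Gc_ge0 x k.
have hk' : 0 <= k%:R :> R by rewrite ler0n.
move: A B; rewrite -natr1 natrD natrM.
set g := Gc x k; set B1 := mu_ball n cnt x (2 * k + 1); set B0 := mu_ball n cnt x k.
set K := k%:R.
move=> A B.
have P : 0 <= K * g by apply: mulr_ge0.
lra.
Qed.

Lemma cnt_ge1 x k : (1 <= x <= n)%N -> 1 <= mu_ball n cnt x k.
Proof.
move=> hx; apply: le_trans (ball_mono cnt_meas _ (leq0n k)).
by rewrite ball0 /Fx hx /cnt.
Qed.

End Count.

Section Plumb.
Local Open Scope classical_set_scope.
Variable R : realType.
Variable n : nat.

Lemma minpos (mu : nat -> R) : is_measure n mu ->
  exists2 m : R, 0 < m & forall y, (1 <= y <= n)%N -> m <= mu y.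
Proof.
move=> hm.
suff : forall N, exists2 m : R, 0 < m & forall y, (1 <= y <= N)%N -> (y <= n)%N -> m <= mu y.
  by case/(_ n) => m m0 H; exists m => // y hy; apply: H => //; lia.
elim=> [|N [m m0 H]]; first by exists 1 => //; lia.
case: (leqP N.+1 n) => hN.
  have p : 0 < mu N.+1 by apply: hm; lia.
  exists (Num.min m (mu N.+1)); first by rewrite lt_min m0 p.
  move=> y hy hyn; case: (eqVneq y N.+1) => [->|ne]; first by rewrite ge_min lexx orbT.
  by rewrite ge_min H ?orTb //; lia.
by exists m => // y hy hyn; apply: H => //; lia.
Qed.

Definition ratios (mu : nat -> R) := [set c | exists x k : nat, (1 <= x <= n)%N /\
         c = mu_ball n mu x (2 * k + 1) / mu_ball n mu x k].

Lemma ratios_ub (mu : nat -> R) : is_measure n mu -> has_ubound (ratios mu).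
Proof.
move=> hm; have [m m0 Hm] := minpos hm.
exists (tmass n mu / m) => c [x [k [hx ->]]].
have b0 := ball_gt0 hm k hx.
have bx : m <= mu_ball n mu x k.
  apply: le_trans (Hm x hx) _; apply: le_trans (ball_mono hm _ (leq0n k)).
  by rewrite ball0 /Fx hx.
have bt := ball_le_total hm (2 * k + 1) hx.
have b1 := ball_ge0 hm x (2 * k + 1).
rewrite ler_pdivrMr // mulrAC ler_pdivlMr //.
apply: ler_pM => //; exact: ltW.
Qed.

Lemma ratio_le_Cmu (mu : nat -> R) x k : is_measure n mu -> (1 <= x <= n)%N ->
  mu_ball n mu x (2 * k + 1) <= C_mu n mu * mu_ball n mu x k.
Proof.
move=> hm hx.
have h := ub_le_sup (ratios_ub hm) (_ : ratios mu (mu_ball n mu x (2 * k + 1) / mu_ball n mu x k)).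
have b0 := ball_gt0 hm k hx.
rewrite -ler_pdivrMr //; apply: h; by exists x, k.
Qed.

Lemma Cmu_le (mu : nat -> R) (M : R) : is_measure n mu -> (1 <= n)%N ->
  (forall x k, (1 <= x <= n)%N -> mu_ball n mu x (2 * k + 1) <= M * mu_ball n mu x k) ->
  C_mu n mu <= M.
Proof.
move=> hm hn H; apply: ge_sup.
  by exists (mu_ball n mu 1 (2 * 0 + 1) / mu_ball n mu 1 0); exists 1%N, 0%N; split => //; lia.
move=> c [x [k [hx ->]]].
have b0 := ball_gt0 hm k hx.
by rewrite ler_pdivrMr //; apply: H.
Qed.

End Plumb.

Section Bounds.
Local Open Scope classical_set_scope.
Variable R : realType.
Variable n : nat.
Hypothesis hn : (3 <= n)%N.

Lemma ball_one (mu : nat -> R) x :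
  mu_ball n mu x (2 * 0 + 1) = Fx n mu x + Fx n mu (x - 1) + Fx n mu x.+1.
Proof. by rewrite /= ballS ball0 addn1. Qed.

Lemma Cmu_ge (mu : nat -> R) : is_measure n mu -> 12 <= 5 * C_mu n mu.
Proof.
move=> hm.
have h1 := ratio_le_Cmu 0 hm (_ : (1 <= 1 <= n)%N); rewrite ball_one ball0 in h1.
have h2 := ratio_le_Cmu 0 hm (_ : (1 <= 2 <= n)%N); rewrite ball_one ball0 in h2.
have h3 := ratio_le_Cmu 0 hm (_ : (1 <= 3 <= n)%N); rewrite ball_one ball0 in h3.
have {}h1 := h1 ltac:(lia); have {}h2 := h2 ltac:(lia); have {}h3 := h3 ltac:(lia).
move: h1 h2 h3; rewrite /= F0.
have p1 : 0 < Fx n mu 1 by apply: Fgt0 => //; lia.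
have p2 : 0 < Fx n mu 2 by apply: Fgt0 => //; lia.
have p3 : 0 < Fx n mu 3 by apply: Fgt0 => //; lia.
have p4 := Fge0 hm 4.
set a := Fx n mu 1; set b := Fx n mu 2; set c := Fx n mu 3; set d := Fx n mu 4.
set C := C_mu n mu.
move=> h1 h2 h3.
have : 12 * a + 17 * b + 12 * c <= C * (5 * a + 7 * b + 5 * c).
  have -> : C * (5 * a + 7 * b + 5 * c) = 5 * (C * a) + 7 * (C * b) + 5 * (C * c) by ring.
  move: p4; rewrite -/d => p4; lra.
move=> h; rewrite leNgt; apply/negP => hC.
have : 0 < (12 - 5 * C) * (5 * a + 7 * b + 5 * c).
  by apply: mulr_gt0; move: p1 p2 p3; rewrite -/a -/b -/c; lra.
have e : (12 - 5 * C) * (5 * a + 7 * b + 5 * c) = 12 * (5 * a + 7 * b + 5 * c) - 5 * (C * (5 * a + 7 * b + 5 * c)) by ring.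
rewrite e => q.
move: p2; rewrite -/b => p2.
lra.
Qed.

Definition CLset := [set c : R | exists mu : nat -> R, is_measure n mu /\ c = C_mu n mu].

Lemma Cset_lb : has_lbound CLset.
Proof.
exists (12 / 5) => c [mu [hm ->]].
have := Cmu_ge hm; rewrite ler_pdivrMr //; lra.
Qed.

Lemma CLn_ge : 12 <= 5 * @C_Ln R n.
Proof.
have : 12 / 5 <= @C_Ln R n.
  apply: lb_le_inf; first by exists (C_mu n (@cnt R)), (@cnt R); split => //; exact: cnt_meas.
  move=> c [mu [hm ->]]; have := Cmu_ge hm; rewrite ler_pdivrMr //; lra.
rewrite ler_pdivrMr //; lra.
Qed.

Lemma CLn_le (mu : nat -> R) : is_measure n mu -> @C_Ln R n <= C_mu n mu.
Proof. by move=> hm; apply: (ge_inf Cset_lb); exists mu. Qed.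

Lemma CLn_le3 : @C_Ln R n <= 3.
Proof.
apply: le_trans (CLn_le (@cnt_meas R n)) _.
apply: Cmu_le; first exact: cnt_meas.
  lia.
by move=> x k hx; apply: cnt_3.
Qed.

End Bounds.

Section GP.
Variable R : realType.

Lemma gap1 (e : nat -> R) N :
  exists2 g : R, 0 < g & forall i, (i < N)%N -> e i < 0 -> e i <= - g.
Proof.
elim: N => [|N [g g0 H]]; first by exists 1.
case: (ltP (e N) 0) => hN.
  exists (Num.min g (- e N)); first by rewrite lt_min g0 oppr_gt0 hN.
  move=> i; rewrite ltnS leq_eqVlt => /orP [/eqP -> _|hi hei].
    by rewrite lerNr ge_min lexx orbT.
  apply: le_trans (H i hi hei) _; by rewrite lerN2 ge_min lexx.
exists g => // i; rewrite ltnS leq_eqVlt => /orP [/eqP -> |hi hei]; last exact: H.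
by move=> h; move: hN; rewrite leNgt h.
Qed.

Lemma gap2 (e : nat -> nat -> R) N M :
  exists2 g : R, 0 < g & forall i j, (i < N)%N -> (j < M)%N -> e i j < 0 -> e i j <= - g.
Proof.
elim: N => [|N [g g0 H]]; first by exists 1.
have [g' g'0 H'] := gap1 (e N) M.
exists (Num.min g g'); first by rewrite lt_min g0 g'0.
move=> i j; rewrite ltnS leq_eqVlt => /orP [/eqP -> |hi] hj hij.
  apply: le_trans (H' j hj hij) _; by rewrite lerN2 ge_min lexx orbT.
apply: le_trans (H i j hi hj hij) _; by rewrite lerN2 ge_min lexx.
Qed.

Lemma ball_norm n (d : nat -> R) x r :
  `|mu_ball n d x r| <= \sum_(1 <= y < n.+1) `|d y|.
Proof.
rewrite ball_mk; apply: le_trans (ler_norm_sum _ _ _) _.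
by apply: ler_sum => y _; case: ifP => _; rewrite ?normr0.
Qed.

Lemma pt_norm n (d : nat -> R) y : (1 <= y <= n)%N ->
  `|d y| <= \sum_(1 <= y < n.+1) `|d y|.
Proof.
move=> hy; have := ball_norm n d y 0; by rewrite ball0 /Fx hy.
Qed.

Lemma GP n (mu d : nat -> R) (beta : R) :
  (3 <= n)%N -> is_measure n mu -> C_mu n mu = @C_Ln R n -> 0 < beta ->
  (forall x k, (1 <= x <= n)%N -> (k < n)%N ->
     mu_ball n mu x (2 * k + 1) < @C_Ln R n * mu_ball n mu x k \/
     mu_ball n d x (2 * k + 1) - @C_Ln R n * mu_ball n d x k <= - beta) -> False.
Proof.
move=> hn hm hC hb H.
set C := @C_Ln R n in hC H.
have C1 : 12 <= 5 * C := CLn_ge R hn.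
have hall : forall x k, (1 <= x <= n)%N -> mu_ball n mu x (2 * k + 1) <= C * mu_ball n mu x k.
  by move=> x k hx; rewrite -hC; apply: ratio_le_Cmu.
have [g g0 Hg] := gap2 (fun x k => mu_ball n mu x (2 * k + 1) - C * mu_ball n mu x k) n.+1 n.
have [m m0 Hm] := minpos hm.
set Dl := \sum_(1 <= y < n.+1) `|d y|.
have D0 : 0 <= Dl by apply: sumr_ge0 => y _.
set eps := Num.min m (g / (1 + C)) / (2 * (Dl + 1)).
have gC0 : 0 < g / (1 + C) by apply: divr_gt0 => //; lra.
have mn0 : 0 < Num.min m (g / (1 + C)) by rewrite lt_min m0 gC0.
have e0 : 0 < eps by apply: divr_gt0 => //; lra.
have eD : eps * (2 * (Dl + 1)) = Num.min m (g / (1 + C)).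
  by rewrite /eps mulfVK //; lra.
have eDm : eps * Dl <= m / 2.
  have : Num.min m (g / (1 + C)) <= m by rewrite ge_min lexx.
  rewrite -eD => h; have : 0 <= eps by lra.
  move=> e0'; have : eps * Dl <= eps * (Dl + 1) by apply: ler_wpM2l => //; lra.
  lra.
have eDg : eps * ((1 + C) * Dl) <= g / 2.
  have : Num.min m (g / (1 + C)) <= g / (1 + C) by rewrite ge_min lexx orbT.
  rewrite -eD => h.
  have h2 : eps * (Dl + 1) * (1 + C) <= g / (1 + C) / 2 * (1 + C).
    by apply: ler_wpM2r; lra.
  have e3 : g / (1 + C) / 2 * (1 + C) = g / 2 by field; lra.
  rewrite e3 in h2.
  have : eps * Dl * (1 + C) <= eps * (Dl + 1) * (1 + C).
    apply: ler_wpM2r; first lra.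
    by apply: ler_wpM2l; lra.
  have -> : eps * ((1 + C) * Dl) = eps * Dl * (1 + C) by ring.
  lra.
set nu := fun y => mu y + eps * d y.
have hnu : is_measure n nu.
  move=> y hy; rewrite /nu.
  have := Hm y hy; have := pt_norm d hy; rewrite -/Dl => h1 h2.
  have : - (eps * Dl) <= eps * d y.
    have : `|eps * d y| <= eps * Dl by rewrite normrM gtr0_norm //; apply: ler_wpM2l; lra.
    rewrite ler_norml => /andP [a _]; exact: a.
  lra.
set rho := Num.min (g / 2) (eps * beta).
have rho0 : 0 < rho by rewrite lt_min; apply/andP; split; [lra|apply: mulr_gt0].
have claim : forall x k, (1 <= x <= n)%N -> (k < n)%N ->
    mu_ball n nu x (2 * k + 1) - C * mu_ball n nu x k <= - rho.
  move=> x k hx hk; rewrite /nu !ball_lin.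
  case: (H x k hx hk) => [hs|hbeta].
    have hx1 : (x < n.+1)%N by clear -hx; lia.
    have hgap := Hg x k hx1 hk ltac:(lra).
    have n1 := ball_norm n d x (2 * k + 1); have n2 := ball_norm n d x k.
    rewrite -/Dl in n1 n2.
    set a := mu_ball n d x (2 * k + 1) in n1 *; set b := mu_ball n d x k in n2 *.
    have : eps * a - C * (eps * b) <= eps * ((1 + C) * Dl).
      have -> : eps * a - C * (eps * b) = eps * (a - C * b) by ring.
      apply: ler_wpM2l; first lra.
      have : a <= Dl by apply: le_trans (ler_norm a) n1.
      have : - Dl <= b by have := n2; rewrite ler_norml => /andP [].
      have : 0 <= C by lra.
      move=> hC0 hb1 ha1.
      have : 0 <= C * (b + Dl) by apply: mulr_ge0; lra.
      lra.
    have : rho <= g / 2 by rewrite ge_min lexx.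
    move: hgap; set A := mu_ball n mu x (2 * k + 1); set B := mu_ball n mu x k.
    move=> h1 h2 h3.
    have -> : A + eps * a - C * (B + eps * b) = (A - C * B) + (eps * a - C * (eps * b)) by ring.
    lra.
  have := hall x k hx.
  have : rho <= eps * beta by rewrite ge_min lexx orbT.
  set A := mu_ball n mu x (2 * k + 1); set B := mu_ball n mu x k.
  set a := mu_ball n d x (2 * k + 1) in hbeta *; set b := mu_ball n d x k in hbeta *.
  move=> h1 h2.
  have : eps * (a - C * b) <= eps * (- beta) by apply: ler_wpM2l; lra.
  have -> : A + eps * a - C * (B + eps * b) = (A - C * B) + eps * (a - C * b) by ring.
  lra.
set T := tmass n nu.
have T0 : 0 < T.
  have h1 : (1 <= 1 <= n)%N by clear -hn; lia.
  by rewrite /T -(ball_total nu h1 (leqnn n)); apply: ball_gt0.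
set eta := Num.min (rho / T) (C - 1).
have eta0 : 0 < eta by rewrite lt_min; apply/andP; split; [apply: divr_gt0|lra].
have : C_mu n nu <= C - eta.
  apply: Cmu_le => //; first by clear -hn; lia.
  move=> x k hx.
  case: (ltnP k n) => hk.
    have := claim x k hx hk.
    have b0 := ball_gt0 hnu k hx.
    have bT := ball_le_total hnu k hx.
    rewrite -/T in bT.
    have : eta * mu_ball n nu x k <= rho.
      have : eta <= rho / T by rewrite ge_min lexx.
      move=> h; apply: le_trans (_ : rho / T * T <= rho).
        apply: le_trans (_ : eta * T <= _).
          by apply: ler_wpM2l; lra.
        by apply: ler_wpM2r; lra.
      by rewrite divfK //; lra.
    move=> h1 h2.
    have -> : (C - eta) * mu_ball n nu x k = C * mu_ball n nu x k - eta * mu_ball n nu x k by ring.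
    lra.
  have hk2 : (n <= 2 * k + 1)%N by clear -hk; lia.
  rewrite (ball_total nu hx hk) (ball_total nu hx hk2).
  have : eta <= C - 1 by rewrite ge_min lexx orbT.
  rewrite -/T => h.
  have -> : (C - eta) * T = T + (C - 1 - eta) * T by ring.
  have : 0 <= (C - 1 - eta) * T by apply: mulr_ge0; lra.
  lra.
move=> h1.
have h2 := CLn_le hn hnu; rewrite -/C in h2.
have h3 : C <= C - eta := le_trans h2 h1.
have h4 : C - eta < C by rewrite ltrBlDr ltrDl.
by move: (lt_le_trans h4 h3); rewrite ltxx.
Qed.

End GP.

Unset Implicit Arguments.
Theorem proposition6p4 (R : realType) (n : nat) (mu : nat -> R) :
  (3 <= n)%N -> is_measure n mu -> is_symmetric n mu ->
  C_mu n mu = @C_Ln R n ->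
  M1 n mu = C0_mu n mu /\ C0_mu n mu = @C_Ln R n.
Proof.
move=> hn hm hsym hC.
set C := @C_Ln R n in hC *.
have C1 : 12 <= 5 * C := CLn_ge R hn.
have hC3 : C <= 3 := CLn_le3 R hn.
have hall : forall x k, (1 <= x <= n)%N -> mu_ball n mu x (2 * k + 1) <= C * mu_ball n mu x k.
  by move=> x k hx; rewrite -hC; apply: ratio_le_Cmu.
have hk0 : forall x, (1 <= x <= n)%N -> mu_ball n mu x 1 <= C * mu_ball n mu x 0.
  by move=> x hx; apply: (hall x 0 hx).
have b0 : forall x, (1 <= x <= n)%N -> mu_ball n mu x 0 = mu x.
  by move=> x hx; rewrite ball0 /Fx hx.
have C0ub : has_ubound [set c | exists x : nat, (1 <= x <= n)%N /\ c = mu_ball n mu x 1 / mu x].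
  exists C => c [x [hx ->]].
  have p := hm x hx.
  by rewrite ler_pdivrMr // -(b0 x hx); apply: hk0.
have C0le : C0_mu n mu <= C.
  apply: ge_sup.
    by exists (mu_ball n mu 1 1 / mu 1), 1%N; split => //; clear -hn; lia.
  move=> c [x [hx ->]].
  have p := hm x hx.
  by rewrite ler_pdivrMr // -(b0 x hx); apply: hk0.
have C0el : forall x, (1 <= x <= n)%N -> mu_ball n mu x 1 <= C0_mu n mu * mu x.
  move=> x hx; have p := hm x hx.
  rewrite -ler_pdivrMr //; apply: (ub_le_sup C0ub); by exists x.
have eK : ceil_div (n - 2) 3 = (n %/ 3)%N.
  by rewrite /ceil_div; congr (_ %/ _)%N; clear -hn; lia.
have M1ub : has_ubound [set c | exists k : nat, (k < ceil_div (n - 2) 3)%N /\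
         c = mu_ball n mu 1 (2 * k + 1) / mu_ball n mu 1 k].
  exists C => c [k [hk ->]].
  have h1 : (1 <= 1 <= n)%N by clear -hn; lia.
  have p := ball_gt0 hm k h1.
  by rewrite ler_pdivrMr //; apply: hall.
have M1le : M1 n mu <= C.
  apply: ge_sup.
    exists (mu_ball n mu 1 (2 * 0 + 1) / mu_ball n mu 1 0), 0%N; split => //.
    by rewrite eK divn_gt0.
  move=> c [k [hk ->]].
  have h1 : (1 <= 1 <= n)%N by clear -hn; lia.
  have p := ball_gt0 hm k h1.
  by rewrite ler_pdivrMr //; apply: hall.
have M1el : forall k, (k < n %/ 3)%N ->
    mu_ball n mu 1 (2 * k + 1) <= M1 n mu * mu_ball n mu 1 k.
  move=> k hk.
  have h1 : (1 <= 1 <= n)%N by clear -hn; lia.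
  have p := ball_gt0 hm k h1.
  rewrite -ler_pdivrMr //; apply: (ub_le_sup M1ub); exists k; split => //.
  by rewrite eK.
have C0eq : C0_mu n mu = C.
  apply/eqP; rewrite eq_le C0le /= leNgt; apply/negP => lt.
  apply: (@GP R n mu (@cnt R) ((3 * C - 7) / 3) hn hm hC).
    by apply: divr_gt0 => //; lra.
  move=> x k hx hk.
  case: k hk => [|k] hk.
    left; have p := hm x hx.
    rewrite (b0 x hx).
    apply: le_lt_trans (C0el x hx) _.
    by rewrite ltr_pM2r.
  right.
  have h73 := @cnt_73 R n x k.+1 hx (ltn0Sn k).
  have h1 := @cnt_ge1 R n x k.+1 hx.
  move: h73 h1; set a := mu_ball n (@cnt R) x (2 * k.+1 + 1); set b := mu_ball n (@cnt R) x k.+1.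
  move=> h73 h1.
  have : 0 <= (3 * C - 7) * (b - 1) by apply: mulr_ge0; lra.
  move=> h2.
  have -> : - ((3 * C - 7) / 3) = (7 - 3 * C) / 3 by field.
  rewrite ler_pdivlMr //.
  lra.
split; last exact: C0eq.
rewrite C0eq.
apply/eqP; rewrite eq_le M1le /= leNgt; apply/negP => lt.
have hM1 : forall k, (k < n %/ 3)%N -> mu_ball n mu 1 (2 * k + 1) < C * mu_ball n mu 1 k.
  move=> k hk; apply: le_lt_trans (M1el k hk) _.
  have h1 : (1 <= 1 <= n)%N by clear -hn; lia.
  by rewrite ltr_pM2r //; apply: ball_gt0.
have hC73 : 7 < 3 * C by lra.
apply: (@GP R n mu (fun y => - (y%:R ^+ 2)) 2 hn hm hC) => //.
move=> x k hx hk.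
case: k hk => [|k] hk; last first.
  by left; apply: (Sprime hn hm hsym hC3 hC73 hk0 hM1).
have h1 : (1 <= 1 <= n)%N by clear -hn; lia.
have hn3 : (0 < n %/ 3)%N by rewrite divn_gt0.
case: (eqVneq x 1) => [->|x1]; first by left; apply: hM1.
case: (eqVneq x n) => [->|xn].
  left.
  have e : forall r, mu_ball n mu n r = mu_ball n mu 1 r.
    by move=> r; rewrite -(ball_mirror hsym r h1) subSS subn0.
  by rewrite !e; apply: hM1.
right.
have hx2 : (2 <= x)%N by clear -hx x1; lia.
have hxn : (x < n)%N by clear -hx xn; lia.
rewrite ball_one ball0 /Fx.
rewrite ifT; last by clear -hx; lia.
rewrite ifT; last by clear -hx2 hxn; lia.
rewrite ifT; last by clear -hx2 hxn; lia.
have ex1 : (x - 1)%:R = x%:R - 1 :> R by rewrite natrB //; clear -hx2; lia.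
have ex2 : (x.+1)%:R = x%:R + 1 :> R by rewrite -natr1.
rewrite ex1 ex2.
set X := x%:R.
have : 0 <= (3 - C) * X ^+ 2 by apply: mulr_ge0 => //; [lra|apply: sqr_ge0].
move=> h.
have -> : - X ^+ 2 - (X - 1) ^+ 2 - (X + 1) ^+ 2 - C * - X ^+ 2 = - 2 - (3 - C) * X ^+ 2 by ring.
lra.
Qed.
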